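(* Coefficientwise modulo $64$, $$\frac{f_2^8}{f_1^{16}}\equiv 21+12\varphi(-q)^2+16\varphi(q^2)+16\varphi(q^4)\pmod{64}.$$
   Context: For a positive integer $k$ let $f_k:=\prod_{m=1}^\infty(1-q^{mk})$, as a formal power series in $q$. Let $\varphi(q):=\sum_{n=-\infty}^{\infty}q^{n^2}$ (Ramanujan's theta function). Congruences between integer power series are meant coefficientwise. *)

(* Defs.v *)
From mathcomp Require Import all_boot all_order all_algebra.
Set Implicit Arguments. Unset Strict Implicit. Unset Printing Implicit Defensive.
Import GRing.Theory Num.Theory.
Local Open Scope ring_scope.

Definition fps := nat -> int.

Definition fconst (c : int) : fps := fun n => if n == 0%N then c else 0.
Definition fadd (a b : fps) : fps := fun n => a n + b n.
Definition fscale (c : int) (a : fps) : fps := fun n => c * a n.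
Definition fmul (a b : fps) : fps := fun n => \sum_(i < n.+1) a i * b (n - i)%N.
Definition fpow (a : fps) (e : nat) : fps := iter e (fmul a) (fconst 1).
(* Multiplicative inverse of a series with constant term 1:
   1/a = sum_j (1 - a)^j; since 1 - a has zero constant term, only j <= n
   contributes to the coefficient of q^n. *)
Definition finv (a : fps) : fps :=
  fun n => \sum_(j < n.+1) fpow (fun m => fconst 1 m - a m) j n.
Definition fdiv (a b : fps) : fps := fmul a (finv b).

(* f_k = prod_{m>=1} (1 - q^{mk}); the coefficient of q^n only involves the
   factors with m <= n. *)
Definition f_ (k : nat) : fps :=
  fun n => (\prod_(1 <= m < n.+1) (1 - 'X^(m * k)) : {poly int})`_n.

(* Ramanujan's phi(q) = sum_{j in Z} q^{j^2}: coefficient of q^n is the number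
   of integers j with j^2 = n (necessarily |j| <= n). *)
Definition phi : fps :=
  fun n => (\sum_(i < (2 * n).+1) ((i%:Z - n%:Z) ^+ 2 == n%:Z))%:R.

Definition fneg (a : fps) : fps := fun n => (-1) ^+ n * a n.
(* substitution q -> q^k  (k > 0) *)
Definition fdil (k : nat) (a : fps) : fps :=
  fun n => if (k %| n)%N then a (n %/ k)%N else 0.

(* Main.v *)
Require Import Defs.
From mathcomp Require Import all_boot all_order all_algebra.
From mathcomp Require Import zify ring.
Import GRing.Theory Num.Theory.
Set Implicit Arguments. Unset Strict Implicit.
Local Open Scope ring_scope.

Definition eqc N (p q : {poly int}) := forall i, (i < N)%N -> p`_i = q`_i.

Lemma eqc_refl N p : eqc N p p. Proof. by []. Qed.
Lemma eqc_sym N p q : eqc N p q -> eqc N q p.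
Proof. by move=> h i hi; rewrite h. Qed.
Lemma eqc_trans N p q r : eqc N p q -> eqc N q r -> eqc N p r.
Proof. by move=> h1 h2 i hi; rewrite h1 ?h2. Qed.
Lemma eqcD N p q p' q' : eqc N p p' -> eqc N q q' -> eqc N (p + q) (p' + q').
Proof. by move=> h1 h2 i hi; rewrite !coefD h1 ?h2. Qed.
Lemma eqcN N p p' : eqc N p p' -> eqc N (- p) (- p').
Proof. by move=> h1 i hi; rewrite !coefN h1. Qed.
Lemma eqcB N p q p' q' : eqc N p p' -> eqc N q q' -> eqc N (p - q) (p' - q').
Proof. by move=> h1 h2; apply: eqcD => //; apply: eqcN. Qed.
Lemma eqcM N p q p' q' : eqc N p p' -> eqc N q q' -> eqc N (p * q) (p' * q').
Proof.
move=> h1 h2 i hi; rewrite !coefM; apply: eq_bigr => j _.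
have hj := ltn_ord j.
rewrite h1 ?h2 //; lia.
Qed.
Lemma eqcX N p p' e : eqc N p p' -> eqc N (p ^+ e) (p' ^+ e).
Proof. by move=> h; elim: e => [|e IH]; rewrite ?expr0 // !exprS; apply: eqcM. Qed.
Lemma eqc_sum N (I : finType) (F G : I -> {poly int}) :
  (forall j, eqc N (F j) (G j)) -> eqc N (\sum_j F j) (\sum_j G j).
Proof. by move=> h i hi; rewrite !coef_sum; apply: eq_bigr => j _; rewrite h. Qed.
Lemma eqc_le N N' p q : (N' <= N)%N -> eqc N p q -> eqc N' p q.
Proof. by move=> hN h i hi; apply: h; lia. Qed.
Lemma eqcXn0 N e p : (N <= e)%N -> eqc N ('X^e * p) 0.
Proof. by move=> h i hi; rewrite coefXnM coef0 ifT //; lia. Qed.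

Definition tr N (a : fps) : {poly int} := \poly_(i < N) a i.

Lemma tr_mul N a b : eqc N (tr N (fmul a b)) (tr N a * tr N b).
Proof.
move=> i hi; rewrite coefM coef_poly hi /fmul; apply: eq_bigr => j _.
have hj := ltn_ord j.
rewrite !coef_poly !ifT //; lia.
Qed.
Lemma tr_add N a b : eqc N (tr N (fadd a b)) (tr N a + tr N b).
Proof. by move=> i hi; rewrite coefD !coef_poly hi. Qed.
Lemma tr_scale N c a : eqc N (tr N (fscale c a)) (c%:P * tr N a).
Proof. by move=> i hi; rewrite coefCM !coef_poly hi. Qed.
Lemma tr_const N c : eqc N (tr N (fconst c)) c%:P.
Proof. by move=> i hi; rewrite coefC !coef_poly hi. Qed.
Lemma tr_pow N a e : eqc N (tr N (fpow a e)) (tr N a ^+ e).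
Proof.
elim: e => [|e IH]; first by rewrite expr0; apply: tr_const.
rewrite exprS; change (fpow a e.+1) with (fmul a (fpow a e)).
exact: (eqc_trans (@tr_mul N a (fpow a e)) (eqcM (@eqc_refl N (tr N a)) IH)).
Qed.

Lemma X_factor (C : {poly int}) : C`_0 = 0 -> C = 'X * \poly_(i < size C) C`_i.+1.
Proof.
move=> h; apply/polyP => i; rewrite coefXM coef_poly; case: i => [|i] //=.
by case: (ltnP i (size C)) => hs //; rewrite nth_default // ltnW.
Qed.
Lemma coef_pow_small (C : {poly int}) j i : C`_0 = 0 -> (i < j)%N -> (C ^+ j)`_i = 0.
Proof. by move=> h hij; rewrite (X_factor h) exprMn coefXnM hij. Qed.

Lemma geom_inv N (p : {poly int}) : p`_0 = 1 ->
  eqc N ((\sum_(j < N) (1 - p) ^+ j) * p) 1.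
Proof.
move=> h0.
have hC : (1 - p)`_0 = 0 by rewrite coefB coef1 h0 subrr.
have -> : (\sum_(j < N) (1 - p) ^+ j) * p = 1 - (1 - p) ^+ N.
  set C := 1 - p; have e := subrX1 C N.
  have -> : p = 1 - C by rewrite /C; ring.
  transitivity (-((C - 1) * \sum_(i < N) C ^+ i)); first by ring.
  by rewrite -e; ring.
by move=> i hi; rewrite coefB coef_pow_small // subr0.
Qed.

Lemma inv_ex N (p : {poly int}) : p`_0 = 1 -> exists p', eqc N (p' * p) 1.
Proof. by move=> h; exists (\sum_(j < N) (1 - p) ^+ j); apply: geom_inv. Qed.

Lemma tr_inv N (b : fps) : b 0%N = 1 -> eqc N (tr N (Defs.finv b) * tr N b) 1.
Proof.
move=> hb; case: N => [|N]; first by move=> i.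
pose c : fps := fun m => fconst 1 m - b m.
have hc : eqc N.+1 (tr N.+1 c) (1 - tr N.+1 b).
  by move=> i hi; rewrite coefB coef1 !coef_poly hi /c /fconst; case: (i == 0%N).
have hC0 : (tr N.+1 c)`_0 = 0 by rewrite coef_poly /c /fconst /= hb subrr.
have h1 : eqc N.+1 (tr N.+1 (Defs.finv b)) (\sum_(j < N.+1) (1 - tr N.+1 b) ^+ j).
  eapply eqc_trans; last exact: (eqc_sum (fun j : 'I_N.+1 => @eqcX _ _ _ j hc)).
  move=> i hi; rewrite coef_sum coef_poly hi /Defs.finv.
  have e : forall j, (tr N.+1 c ^+ j)`_i = fpow c j i.
    by move=> j; rewrite -(tr_pow (N := N.+1)) // coef_poly hi.
  rewrite (eq_bigr (fun j : 'I_N.+1 => fpow c j i)); last by move=> j _; rewrite e.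
  rewrite -(big_mkord xpredT (fun j => fpow c j i)) -(big_mkord xpredT (fun j => fpow c j i)).
  rewrite [RHS](@big_cat_nat _ _ _ i.+1) //= [X in _ = _ + X]big1_seq ?addr0 //.
  move=> j; rewrite mem_index_iota => /andP [hj1 /andP [hj2 _]].
  by rewrite -e coef_pow_small.
eapply eqc_trans; last apply: (@geom_inv N.+1).
  by apply: eqcM; first exact: h1.
by rewrite coef_poly /= hb.
Qed.
Lemma sum_ext (F : nat -> int) m K : (m <= K)%N ->
  (forall j, (m <= j < K)%N -> F j = 0) ->
  \sum_(j < m) F j = \sum_(j < K) F j.
Proof.
move=> hmK h.
rewrite -(big_mkord xpredT) -(big_mkord xpredT).
rewrite [RHS](@big_cat_nat _ _ _ m) //= [X in _ = _ + X]big1_seq ?addr0 //.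
by move=> j; rewrite mem_index_iota => /andP [_ hj]; apply: h.
Qed.

Definition sqc (n : nat) : nat := \sum_(j < n) ((j.+1 ^ 2)%N == n).

Lemma sq_int (a b : nat) : ((a%:Z) ^+ 2 == b%:Z) = ((a ^ 2)%N == b).
Proof. by rewrite expr2 -PoszM eqz_nat mulnn. Qed.

Lemma phi_count n :
  (\sum_(i < (2 * n).+1) ((i%:Z - n%:Z) ^+ 2 == n%:Z))%N = ((n == 0%N) + 2 * sqc n)%N.
Proof.
rewrite -(big_mkord xpredT (fun i => ((i%:Z - n%:Z) ^+ 2 == n%:Z) : nat)).
rewrite (@big_cat_nat _ _ _ n) //=; last lia.
rewrite (@big_cat_nat _ _ _ n.+1 n) //=; last lia.
rewrite big_nat1 subrr expr0n /= eqz_nat eq_sym.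
rewrite big_nat_rev /= add0n (big_addn 0 (2 * n).+1 n.+1).
have -> : ((2 * n).+1 - n.+1 = n)%N by lia.
have e1 : forall i, (i < n)%N ->
   (((n - i.+1)%N%:Z - n%:Z) ^+ 2 == n%:Z) = ((i.+1 ^ 2)%N == n).
  move=> i hi; rewrite -subzn; last lia.
  rewrite -sq_int; congr (_ == _); rewrite -sqrrN; congr (_ ^+ 2).
  ring.
have e2 : forall i, (((i + n.+1)%N%:Z - n%:Z) ^+ 2 == n%:Z) = ((i.+1 ^ 2)%N == n).
  move=> i; rewrite -sq_int; congr (_ == _); congr (_ ^+ 2).
  rewrite PoszD; ring.
rewrite big_nat_cond (eq_bigr (fun i => ((i.+1 ^ 2)%N == n) : nat)); last first.
  by move=> i /andP [/andP [_ hi] _]; rewrite e1.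
rewrite [X in (_ + (_ + X))%N](eq_bigr (fun i => ((i.+1 ^ 2)%N == n) : nat)); last by move=> i _; rewrite e2.
rewrite -big_nat_cond /sqc big_mkord.
lia.
Qed.

Lemma phiE n : phi n = ((n == 0%N) + 2 * sqc n)%N%:R.
Proof. by rewrite /phi phi_count. Qed.

Definition P (k m : nat) : {poly int} := \prod_(1 <= i < m.+1) (1 - 'X^(i * k)).

Lemma prod_eqc1 L a b (e : nat -> nat) :
  (forall i, (a <= i < b)%N -> (L <= e i)%N) ->
  eqc L (\prod_(a <= i < b) (1 - 'X^(e i))) 1.
Proof.
move=> h; rewrite big_seq_cond.
apply: (big_ind (fun p => eqc L p 1)).
- exact: eqc_refl.
- by move=> x y hx hy; have := eqcM hx hy; rewrite mulr1.
- move=> i /andP [hi _]; rewrite mem_index_iota in hi.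
  move=> j hj; rewrite coefB coefXn coef1.
  have -> : (j == e i) = false by apply/negbTE/eqP; have := h i hi; lia.
  by rewrite subr0.
Qed.

Lemma P_mono k L m m' : (0 < k)%N -> (L <= m.+1)%N -> (m <= m')%N ->
  eqc L (P k m) (P k m').
Proof.
move=> hk hL hm; rewrite /P (@big_cat_nat _ _ _ m.+1 1 m'.+1) //=.
apply: eqc_sym.
have h : eqc L (\prod_(m.+1 <= i < m'.+1) (1 - 'X^(i * k))) 1.
  apply: prod_eqc1 => i /andP [hi _].
  apply: (leq_trans hL); apply: (leq_trans hi); by rewrite leq_pmulr.
by have := eqcM (@eqc_refl L (\prod_(1 <= i < m.+1) (1 - 'X^(i * k)))) h; rewrite mulr1.
Qed.

Lemma tr_f k N : (0 < k)%N -> eqc N (tr N (f_ k)) (P k N).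
Proof.
move=> hk i hi; rewrite coef_poly hi /f_.
by apply: (@P_mono k i.+1 i N) => //; apply: ltnW.
Qed.

Definition U (K : nat) : {poly int} := \sum_(j < K) ((-1) ^+ j.+1) *: 'X^(j.+1 ^ 2).
Definition Ud (d K : nat) : {poly int} := \sum_(j < K) 'X^(d * j.+1 ^ 2).

Lemma coef2 (p : {poly int}) i : (2 * p)`_i = 2 * p`_i.
Proof. by rewrite -polyC_natr coefCM. Qed.

Lemma sign_sq (j : nat) : (-1) ^+ (j ^ 2)%N = (-1) ^+ j :> int.
Proof. by rewrite -signr_odd -[RHS]signr_odd expnS expn1 oddM andbb. Qed.

Lemma tr_fneg N K : (N <= K)%N -> eqc N (tr N (fneg phi)) (1 + 2 * U K).
Proof.
move=> hK i hi; rewrite coefD coef2 coef1 coef_poly hi /fneg phiE.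
rewrite /U coef_sum natrD natrM mulrDr.
congr (_ + _); first by case: (i =P 0%N) => [->|]; rewrite ?expr0 ?mulr1 ?mulr0.
rewrite mulrCA; congr (_ * _).
rewrite /sqc natr_sum mulr_sumr.
rewrite (@sum_ext (fun j => (-1) ^+ i * ((j.+1 ^ 2)%N == i)%:R) i K); last first.
- move=> j /andP [hj _]; rewrite (_ : (j.+1 ^ 2)%N == i = false) ?mulr0 //.
  apply/negbTE/eqP; nia.
- lia.
apply: eq_bigr => j _; rewrite coefZ coefXn eq_sym.
case: eqP => [e|]; last by rewrite !mulr0.
subst i; by rewrite sign_sq.
Qed.

Lemma tr_fdil d N K : (0 < d)%N -> (N <= K)%N ->
  eqc N (tr N (fdil d phi)) (1 + 2 * Ud d K).
Proof.
move=> hd hK i hi; rewrite coefD coef2 coef1 coef_poly hi /fdil /Ud coef_sum.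
case: (boolP (d %| i)%N) => hdi.
- rewrite phiE natrD natrM; congr (_ + _).
    by congr (_%:R); rewrite -{2}(divnK hdi) muln_eq0 (negbTE (lt0n_neq0 hd)) orbF.
  congr (_ * _); rewrite /sqc natr_sum.
  rewrite (@sum_ext (fun j => ((j.+1 ^ 2)%N == (i %/ d)%N)%:R) (i %/ d) K); last first.
  + move=> j /andP [hj _]; rewrite (_ : (j.+1 ^ 2)%N == (i %/ d)%N = false) //.
    apply/negbTE/eqP; nia.
  + have := leq_div i d; lia.
  apply: eq_bigr => j _; rewrite coefXn; congr (_%:R).
  by rewrite -[in RHS](divnK hdi) [in RHS]mulnC eqn_pmul2l // eq_sym.
- rewrite big1 ?mulr0 ?addr0.
    by case: (i =P 0%N) hdi => // ->; rewrite dvdn0.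
  move=> j _; rewrite coefXn; case: eqP => // e.
  by move: hdi; rewrite e dvdn_mulr.
Qed.

Fixpoint qb (Q : {poly int}) (n k : nat) {struct n} : {poly int} :=
  match n, k with
  | _, 0 => 1
  | 0, _.+1 => 0
  | n'.+1, k'.+1 => qb Q n' k'.+1 + Q ^+ (n' - k') * qb Q n' k'
  end.

Lemma qb0 Q n : qb Q n 0 = 1. Proof. by case: n. Qed.
Lemma qbS Q n k : qb Q n.+1 k.+1 = qb Q n k.+1 + Q ^+ (n - k) * qb Q n k.
Proof. by []. Qed.
Lemma qb_gt Q n k : (n < k)%N -> qb Q n k = 0.
Proof.
elim: n k => [|n IH] [|k] // h.
by rewrite qbS !IH ?mulr0 ?addr0 //; lia.
Qed.
Lemma qb_nn Q n : qb Q n n = 1.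
Proof. by elim: n => // n IH; rewrite qbS qb_gt // subnn expr0 mul1r IH add0r. Qed.

Lemma qb_thm (Q y z : {poly int}) n :
  \prod_(0 <= i < n) (y + z * Q ^+ i) =
  \sum_(0 <= k < n.+1) z ^+ k * y ^+ (n - k) * Q ^+ 'C(k, 2) * qb Q n k.
Proof.
elim: n => [|n IH].
  by rewrite big_geq // big_nat1 !expr0 qb0 !mulr1.
rewrite big_nat_recr //= IH mulrDr !big_distrl /=.
rewrite [RHS]big_nat_recl //.
under [X in _ = _ + X]eq_bigr => k _ do rewrite mulrDr.
rewrite big_split /= addrA; congr (_ + _).
  rewrite big_nat_recl // [X in _ = _ + X]big_nat_recr //=.
  rewrite (qb_gt Q (ltnSn n)) mulr0 addr0 !qb0 (_ : 'C(0, 2) = 0%N) // !expr0 !mul1r !mulr1 subn0 -exprSr; congr (_ + _).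
  apply: eq_big_nat => k /andP [_ hk].
  by rewrite subSS -(subnSK hk) (exprSr y); ring.
apply: eq_big_nat => k /andP [_ hk].
have hkn : (k <= n)%N by lia.
rewrite subSS binS bin1 exprD exprS.
have -> : Q ^+ n = Q ^+ k * Q ^+ (n - k) by rewrite -exprD subnKC.
ring.
Qed.

Definition Pq (Q : {poly int}) m := \prod_(0 <= i < m) (1 - Q ^+ i.+1).

Lemma PqS Q m : Pq Q m.+1 = Pq Q m * (1 - Q ^+ m.+1).
Proof. by rewrite /Pq big_nat_recr. Qed.
Lemma Pq0 Q : Pq Q 0 = 1.
Proof. by rewrite /Pq big_geq. Qed.

Lemma qb_prod Q n k : (k <= n)%N -> qb Q n k * Pq Q k * Pq Q (n - k) = Pq Q n.
Proof.
elim: n k => [|n IH] [|k] hk //.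
- by rewrite qb0 Pq0 !mul1r.
- by rewrite qb0 Pq0 !mul1r subn0.
rewrite qbS subSS.
case: (ltngtP k n) => hkn; last first.
- by subst k; rewrite qb_gt // qb_nn subnn expr0 Pq0 add0r !mul1r mulr1.
- lia.
have IHa := IH k.+1 hkn.
have IHb := IH k (ltnW hkn).
have e : (n - k = (n - k.+1).+1)%N by lia.
rewrite PqS e PqS -e in IHb *.
rewrite PqS in IHa *.
rewrite [Pq Q n.+1]PqS.
have -> : Q ^+ n.+1 = Q ^+ (n - k) * Q ^+ k.+1 by rewrite -exprD; congr (_ ^+ _); lia.
move: IHa IHb; move: (qb Q n k.+1) (qb Q n k) (Pq Q k) (Pq Q n) (Pq Q (n - k.+1)) (Q ^+ (n - k)) (Q ^+ k.+1).
move=> a b Pk Pn Pr A B IHa IHb.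
transitivity ((a * (Pk * (1 - B)) * Pr) * (1 - A) + A * (1 - B) * (b * Pk * (Pr * (1 - A)))).
  by ring.
rewrite IHa IHb; ring.
Qed.

Lemma PoszX (a b : nat) : ((a ^ b)%N)%:Z = (a%:Z) ^+ b.
Proof. by rewrite -!natz natrX. Qed.
Lemma arith N k : (0 < N)%N -> (k <= 2 * N)%N ->
  ((2 * N - 1) * (2 * N - k) + k * k.-1 = N * N.-1 + N * (2 * N - 1) + (k - N + (N - k)) ^ 2)%N.
Proof.
move=> hN hk.
have ed : ((k - N + (N - k)) ^ 2)%N%:Z = (k%:Z - N%:Z) ^+ 2.
  case: (leqP k N) => h.
  - have -> : (k - N + (N - k) = N - k)%N by lia.
    by rewrite PoszX -subzn // -sqrrN opprB.
  - have -> : (k - N + (N - k) = k - N)%N by lia.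
    by rewrite PoszX -subzn // ltnW.
have eN : (N.-1)%:Z = N%:Z - 1 by rewrite -subn1 -subzn //.
apply/eqP; rewrite -eqz_nat; apply/eqP.
rewrite !PoszD ed !PoszM eN -!subzn //; try lia.
case: k hk {ed} => [|k] hk /=; first by rewrite !PoszM; ring.
rewrite -addn1 !PoszM PoszD; ring.
Qed.

Lemma bin2x k : (2 * 'C(k, 2) = k * k.-1)%N.
Proof.
elim: k => // k IH; rewrite binS bin1 mulnDr IH.
case: k {IH} => // k /=; lia.
Qed.

Definition O N : {poly int} := \prod_(0 <= i < N) (1 - 'X^(2 * i + 1)).

Lemma O_rev N : O N = \prod_(0 <= i < N) (1 - 'X^(2 * (0 + N - i.+1) + 1)).
Proof. by rewrite /O big_nat_rev. Qed.

Lemma prod_left N (hN : (0 < N)%N) :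
  \prod_(0 <= i < 2 * N) ('X^(2 * N - 1) + (-1) * ('X^2) ^+ i) =
  (-1) ^+ N * 'X^(N * N.-1 + N * (2 * N - 1)) * O N ^+ 2.
Proof.
rewrite (@big_cat_nat _ _ _ N) //=; last lia.
rewrite (big_addn 0 (2 * N) N).
have -> : (2 * N - N = N)%N by lia.
rewrite (eq_big_nat _ _ (F2 := fun i => (-1) * 'X^(2 * i) * (1 - 'X^(2 * (0 + N - i.+1) + 1)))); last first.
  move=> i /andP [_ hi].
  have -> : 'X^(2 * N - 1) = 'X^(2 * i) * 'X^(2 * (0 + N - i.+1) + 1) :> {poly int}.
    by rewrite -exprD; congr ('X^_); lia.
  rewrite -exprM; ring.
rewrite [X in X * _](big_split) big_split /= prodr_const_nat subn0 prodrXr.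
rewrite -O_rev.
rewrite [X in _ * X = _](eq_big_nat _ _ (F2 := fun i => 'X^(2 * N - 1) * (1 - 'X^(2 * i + 1)))); last first.
  move=> i /andP [_ hi].
  have -> : ('X^2) ^+ (i + N) = 'X^(2 * N - 1) * 'X^(2 * i + 1) :> {poly int}.
    by rewrite -exprM -exprD; congr ('X^_); lia.
  ring.
rewrite [X in _ * X = _]big_split prodr_const_nat subn0 -/(O N).
rewrite -big_distrr /= bin2_sum bin2x exprD -exprM.
by rewrite [((2 * N - 1) * N)%N]mulnC; ring.
Qed.

Lemma gauss_fin N : (0 < N)%N ->
  \sum_(0 <= k < (2 * N).+1) (-1) ^+ k * 'X^((k - N + (N - k)) ^ 2) * qb ('X^2) (2 * N) k
  = (-1) ^+ N * O N ^+ 2.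
Proof.
move=> hN.
have h := qb_thm ('X^2) ('X^(2 * N - 1)) (-1) (2 * N).
rewrite prod_left // in h.
apply: (@mulfI _ ('X^(N * N.-1 + N * (2 * N - 1)))).
  by rewrite monic_neq0 // monicXn.
transitivity ((-1) ^+ N * 'X^(N * N.-1 + N * (2 * N - 1)) * O N ^+ 2); last by ring.
rewrite h mulr_sumr; apply: eq_big_nat => k /andP [_ hk].
have hk' : (k <= 2 * N)%N by lia.
rewrite -!exprM bin2x.
have e : 'X^((2 * N - 1) * (2 * N - k)) * 'X^(k * k.-1) =
  'X^(N * N.-1 + N * (2 * N - 1)) * 'X^((k - N + (N - k)) ^ 2) :> {poly int}.
  by rewrite -!exprD arith.
transitivity ((-1) ^+ k * ('X^((2 * N - 1) * (2 * N - k)) * 'X^(k * k.-1)) * qb ('X^2) (2 * N) k); last by ring.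
rewrite e; ring.
Qed.

Lemma eqc_sumn N a b (F G : nat -> {poly int}) :
  (forall i, (a <= i < b)%N -> eqc N (F i) (G i)) ->
  eqc N (\sum_(a <= i < b) F i) (\sum_(a <= i < b) G i).
Proof. by move=> h j hj; rewrite !coef_sum; apply: eq_big_nat => i hi; apply: h. Qed.

Lemma Pq_P m : Pq ('X^2) m = P 2 m.
Proof.
rewrite /P big_add1 /= /Pq; apply: eq_bigr => i _.
by rewrite -exprM mulnC.
Qed.

Lemma P0 k m : (0 < k)%N -> (P k m)`_0 = 1.
Proof.
move=> hk; have := @prod_eqc1 1 1 m.+1 (fun i => i * k)%N.
move=> h; rewrite /P h //; first by rewrite coef1.
move=> i /andP [hi _]; by rewrite muln_gt0 hk andbT.
Qed.

Lemma qbE_one M N k : (0 < M)%N -> N = (2 * M)%N -> (k <= 2 * N)%N ->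
  ((k - N + (N - k)) ^ 2 < M)%N ->
  eqc M (qb ('X^2) (2 * N) k * P 2 M) 1.
Proof.
move=> hM hN hk hd.
have hd1 : (k - N + (N - k) < M)%N.
  move: hd; move: (k - N + (N - k))%N => d hd.
  by apply: leq_ltn_trans hd; case: d => // d; rewrite expnS expn1 leq_pmulr.
have h := qb_prod ('X^2) hk.
rewrite !Pq_P in h.
have e1 : eqc M (P 2 k) (P 2 M) by apply: eqc_sym; apply: P_mono => //; lia.
have e2 : eqc M (P 2 (2 * N - k)) (P 2 M) by apply: eqc_sym; apply: P_mono => //; lia.
have e3 : eqc M (P 2 (2 * N)) (P 2 M) by apply: eqc_sym; apply: P_mono => //; lia.
have h2 : eqc M (qb ('X^2) (2 * N) k * P 2 M * P 2 M) (P 2 M).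
  apply: eqc_trans e3; rewrite -h.
  apply: eqcM; first apply: eqcM; [exact: eqc_refl | exact: eqc_sym e1 | exact: eqc_sym e2].
have [E' hE'] := @inv_ex M (P 2 M) (@P0 2 M isT).
have h3 := eqcM h2 (@eqc_refl M E').
set A := qb ('X^2) (2 * N) k.
apply: (@eqc_trans M _ (A * P 2 M * (E' * P 2 M))).
  by have := eqcM (@eqc_refl M (A * P 2 M)) (eqc_sym hE'); rewrite mulr1.
have -> : A * P 2 M * (E' * P 2 M) = A * P 2 M * P 2 M * E' by ring.
apply: (eqc_trans h3); by rewrite mulrC.
Qed.

Lemma sign_sq2 N : ((-1) ^+ N * (-1) ^+ N : {poly int}) = 1.
Proof.
elim: N => [|N IH]; first by rewrite mulr1.
transitivity ((-1) * (-1) * ((-1) ^+ N * (-1) ^+ N) : {poly int}); first by rewrite !exprS; ring.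
by rewrite IH; ring.
Qed.

Lemma sum_signs N :
  \sum_(0 <= k < (2 * N).+1) (-1) ^+ k * 'X^((k - N + (N - k)) ^ 2)
  = (-1) ^+ N * (1 + 2 * U N) :> {poly int}.
Proof.
pose S := \sum_(0 <= i < N) (-1) ^+ (N + i.+1) * 'X^(i.+1 ^ 2) : {poly int}.
rewrite (@big_cat_nat _ _ _ N) //=; last lia.
rewrite (@big_cat_nat _ _ _ N.+1 N) //=; last lia.
rewrite big_nat1 subnn /= expr0 mulr1.
rewrite big_nat_rev /= add0n (big_addn 0 (2 * N).+1 N.+1).
have -> : ((2 * N).+1 - N.+1 = N)%N by lia.
have -> : \sum_(0 <= i < N) (-1) ^+ (N - i.+1) * 'X^((N - i.+1 - N + (N - (N - i.+1))) ^ 2) = S.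
  apply: eq_big_nat => i /andP [_ hi].
  have -> : (N - i.+1 - N + (N - (N - i.+1)) = i.+1)%N by lia.
  congr (_ * _).
  have -> : (N + i.+1 = (N - i.+1) + 2 * i.+1)%N by lia.
  by rewrite exprD exprM expr2 mulrNN mulr1 expr1n mulr1.
have -> : \sum_(0 <= i < N) (-1) ^+ (i + N.+1) * 'X^((i + N.+1 - N + (N - (i + N.+1))) ^ 2) = S.
  apply: eq_big_nat => i /andP [_ hi].
  have -> : (i + N.+1 - N + (N - (i + N.+1)) = i.+1)%N by lia.
  by congr (_ * _); congr (_ ^+ _); lia.
have eU : (-1) ^+ N * U N = S.
  rewrite /U /S big_mkord mulr_sumr; apply: eq_bigr => i _.
  by rewrite -mul_polyC rmorphXn /= polyCN polyC1 mulrA -exprD.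
have -> : (-1) ^+ N * (1 + 2 * U N) = (-1) ^+ N + 2 * ((-1) ^+ N * U N) by ring.
rewrite eU; ring.
Qed.

Lemma gauss_mod M : (0 < M)%N ->
  eqc M (1 + 2 * U (2 * M)) (O (2 * M) ^+ 2 * P 2 M).
Proof.
move=> hM; set N := (2 * M)%N.
have hN : (0 < N)%N by rewrite /N; lia.
have g := gauss_fin hN.
have key : eqc M ((\sum_(0 <= k < (2 * N).+1)
      (-1) ^+ k * 'X^((k - N + (N - k)) ^ 2) * qb ('X^2) (2 * N) k) * P 2 M)
    (\sum_(0 <= k < (2 * N).+1) (-1) ^+ k * 'X^((k - N + (N - k)) ^ 2)).
  rewrite big_distrl /=; apply: eqc_sumn => k /andP [_ hk].
  have hk' : (k <= 2 * N)%N by lia.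
  case: (ltnP ((k - N + (N - k)) ^ 2) M) => hd.
  - rewrite -mulrA.
    have := eqcM (@eqc_refl M ((-1) ^+ k * 'X^((k - N + (N - k)) ^ 2))) (qbE_one hM erefl hk' hd).
    by rewrite mulr1.
  - apply: (@eqc_trans M _ 0).
      have -> : (-1) ^+ k * 'X^((k - N + (N - k)) ^ 2) * qb ('X^2) (2 * N) k * P 2 M
        = 'X^((k - N + (N - k)) ^ 2) * ((-1) ^+ k * qb ('X^2) (2 * N) k * P 2 M) by ring.
      exact: eqcXn0.
    apply: eqc_sym.
    have -> : (-1) ^+ k * 'X^((k - N + (N - k)) ^ 2) = 'X^((k - N + (N - k)) ^ 2) * (-1) ^+ k :> {poly int} by ring.
    exact: eqcXn0.
rewrite g sum_signs in key.
have := eqcM (@eqc_refl M ((-1) ^+ N)) key.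
have e1 : (-1) ^+ N * ((-1) ^+ N * O N ^+ 2 * P 2 M) = O N ^+ 2 * P 2 M.
  by rewrite !mulrA sign_sq2 mul1r.
have e2 : (-1) ^+ N * ((-1) ^+ N * (1 + 2 * U N)) = 1 + 2 * U N.
  by rewrite mulrA sign_sq2 mul1r.
rewrite e1 e2 => h; exact: eqc_sym h.
Qed.

Lemma PS k m : P k m.+1 = P k m * (1 - 'X^(m.+1 * k)).
Proof. by rewrite /P big_nat_recr. Qed.

Lemma P1_split N : P 1 (2 * N) = O N * P 2 N.
Proof.
elim: N => [|N IH]; first by rewrite /P /O !big_geq // mulr1.
have -> : (2 * N.+1 = (2 * N).+2)%N by lia.
rewrite !PS IH /O big_nat_recr //= -/(O N).
have -> : ((2 * N).+1 * 1 = 2 * N + 1)%N by lia.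
have -> : ((2 * N).+2 * 1 = N.+1 * 2)%N by lia.
ring.
Qed.

Lemma sq_sum (F : nat -> {poly int}) K :
  exists w, (\sum_(j < K) F j) ^+ 2 = \sum_(j < K) F j ^+ 2 + 2 * w.
Proof.
elim: K => [|K [w IH]]; first by exists 0; rewrite !big_ord0; ring.
exists (w + (\sum_(j < K) F j) * F K).
rewrite !big_ord_recr /=.
transitivity ((\sum_(j < K) F j) ^+ 2 + F K ^+ 2 + 2 * ((\sum_(j < K) F j) * F K)); first by ring.
rewrite IH; ring.
Qed.

Lemma U_sq K : exists w, U K ^+ 2 = Ud 2 K + 2 * w.
Proof.
have [w hw] := sq_sum (fun j => (-1) ^+ j.+1 *: 'X^(j.+1 ^ 2) : {poly int}) K.
exists w; rewrite /U hw /Ud; congr (_ + _); apply: eq_bigr => j _.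
rewrite -!mul_polyC rmorphXn /= polyCN polyC1.
transitivity (((-1) ^+ j.+1 * (-1) ^+ j.+1) * ('X^(j.+1 ^ 2) * 'X^(j.+1 ^ 2)) : {poly int}); first by ring.
by rewrite sign_sq2 mul1r -exprD; congr ('X^_); lia.
Qed.

Lemma Ud_sq K : exists w, Ud 2 K ^+ 2 = Ud 4 K + 2 * w.
Proof.
have [w hw] := sq_sum (fun j => 'X^(2 * j.+1 ^ 2) : {poly int}) K.
exists w; rewrite /Ud hw; congr (_ + _); apply: eq_bigr => j _.
by rewrite expr2 -exprD; congr ('X^_); lia.
Qed.

Lemma final_alg (u u2 u4 w1 w2 : {poly int}) :
  u ^+ 2 = u2 + 2 * w1 -> u2 ^+ 2 = u4 + 2 * w2 ->
  (1 + 2 * u) ^+ 8 * (21 + 12 * (1 + 2 * u) ^+ 2 + 16 * (1 + 2 * u2) + 16 * (1 + 2 * u4))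
  = 1 + 64 * ((1 + 17 * u + 127 * u ^+ 2 + 559 * u ^+ 3 + 1614 * u ^+ 4 + 3228 * u ^+ 5
      + 4620 * u ^+ 6 + 4848 * u ^+ 7 + 3828 * u ^+ 8 + 2368 * u ^+ 9 + 1216 * u ^+ 10
      + 512 * u ^+ 11 + 128 * u ^+ 12)
      - (1 + 2 * u) ^+ 8 * (w1 + 2 * u ^+ 2 * w1 - 2 * w1 ^+ 2 + w2)).
Proof.
move=> h1 h2.
have e4 : u4 = u2 ^+ 2 - 2 * w2 by rewrite h2; ring.
have e2 : u2 = u ^+ 2 - 2 * w1 by rewrite h1; ring.
rewrite e4 e2; ring.
Qed.

Lemma fpow0 (a : fps) e : fpow a e 0%N = a 0%N ^+ e.
Proof.
elim: e => [|e IH] //.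
change (fpow a e.+1 0%N) with (fmul a (fpow a e) 0%N).
by rewrite /fmul big_ord1 /= IH exprS.
Qed.

Lemma f0 k : f_ k 0%N = 1.
Proof. by rewrite /f_ big_geq // coef1. Qed.

Lemma Cpoly (n : nat) : ((n%:Z)%:P : {poly int}) = n%:R.
Proof. by rewrite -natz polyC_natr. Qed.

Lemma coef64 (p : {poly int}) i : (64 * p)`_i = 64 * p`_i.
Proof. by rewrite -polyC_natr coefCM. Qed.

Theorem mainTheorem7 : forall n : nat,
  (fdiv (fpow (f_ 2) 8) (fpow (f_ 1) 16) n ==
   fadd (fconst 21)
     (fadd (fscale 12 (fpow (fneg phi) 2))
        (fadd (fscale 16 (fdil 2 phi)) (fscale 16 (fdil 4 phi)))) n
   %[mod 64])%Z.
Proof.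
move=> n.
set M := n.+1.
have hM : (0 < M)%N by [].
set N := (2 * M)%N.
have hMN : (M <= N)%N by rewrite /N; lia.
set A := fpow (f_ 2) 8.
set B := fpow (f_ 1) 16.
set x := 1 + 2 * U N.
set E := P 2 M.
have hA : eqc M (tr M A) (E ^+ 8).
  exact: (eqc_trans (@tr_pow M (f_ 2) 8) (@eqcX M _ _ 8 (@tr_f 2 M isT))).
have hf1 : eqc M (tr M (f_ 1)) (O N * E).
  apply: (eqc_trans (@tr_f 1 M isT)).
  apply: (@eqc_trans M _ (P 1 (2 * N))); first by apply: P_mono => //; lia.
  rewrite P1_split; apply: eqcM; first exact: eqc_refl.
  by apply: eqc_sym; apply: P_mono => //; lia.
have hB : eqc M (tr M B) (x ^+ 8 * E ^+ 8).
  apply: (eqc_trans (@tr_pow M (f_ 1) 16)).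
  apply: (eqc_trans (@eqcX M _ _ 16 hf1)).
  have -> : (O N * E) ^+ 16 = (O N ^+ 2 * E) ^+ 8 * E ^+ 8 by ring.
  apply: eqcM; last exact: eqc_refl.
  by apply: eqcX; apply: eqc_sym; apply: gauss_mod.
have hB0 : B 0%N = 1 by rewrite /B fpow0 f0 expr1n.
have hI := @tr_inv M B hB0.
set I := tr M (Defs.finv B).
set R' := 21 + 12 * x ^+ 2 + 16 * (1 + 2 * Ud 2 N) + 16 * (1 + 2 * Ud 4 N) : {poly int}.
set Rfps := fadd (fconst 21)
     (fadd (fscale 12 (fpow (fneg phi) 2))
        (fadd (fscale 16 (fdil 2 phi)) (fscale 16 (fdil 4 phi)))).
have hR : eqc M (tr M Rfps) R'.
  apply: (eqc_trans (@tr_add M _ _)).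
  have -> : R' = 21 + (12 * x ^+ 2 + (16 * (1 + 2 * Ud 2 N) + 16 * (1 + 2 * Ud 4 N))) by rewrite /R'; ring.
  apply: eqcD; first by apply: (eqc_trans (@tr_const M _)); rewrite ?Cpoly ?polyC_natr; exact: eqc_refl.
  apply: (eqc_trans (@tr_add M _ _)); apply: eqcD.
    apply: (eqc_trans (@tr_scale M _ _)); rewrite ?Cpoly ?polyC_natr; apply: eqcM; first exact: eqc_refl.
    apply: (eqc_trans (@tr_pow M _ _)); apply: eqcX; exact: (tr_fneg hMN).
  apply: (eqc_trans (@tr_add M _ _)); apply: eqcD.
    apply: (eqc_trans (@tr_scale M _ _)); rewrite ?Cpoly ?polyC_natr; apply: eqcM; first exact: eqc_refl.
    exact: (@tr_fdil 2 M N isT hMN).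
  apply: (eqc_trans (@tr_scale M _ _)); rewrite ?Cpoly ?polyC_natr; apply: eqcM; first exact: eqc_refl.
  exact: (@tr_fdil 4 M N isT hMN).
have [w1 hw1] := @U_sq N.
have [w2 hw2] := @Ud_sq N.
have alg := final_alg hw1 hw2.
set T := (X in 1 + 64 * X) in alg.
have hL : eqc M (tr M (fdiv A B)) (E ^+ 8 * I).
  apply: (eqc_trans (@tr_mul M _ _)); apply: eqcM => //; exact: eqc_refl.
have key : eqc M (tr M Rfps) (E ^+ 8 * I + 64 * (T * E ^+ 8 * I)).
  apply: (eqc_trans hR).
  apply: (@eqc_trans M _ (R' * (I * (x ^+ 8 * E ^+ 8)))).
    have := eqcM (@eqc_refl M R') (eqc_sym (eqc_trans (eqcM (@eqc_refl M I) (eqc_sym hB)) hI)).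
    by rewrite mulr1.
  have -> : R' * (I * (x ^+ 8 * E ^+ 8)) = (x ^+ 8 * R') * E ^+ 8 * I by ring.
  rewrite /R' /x alg.
  have -> : (1 + 64 * T) * E ^+ 8 * I = E ^+ 8 * I + 64 * (T * E ^+ 8 * I) by ring.
  exact: eqc_refl.
have hnM : (n < M)%N by [].
have e1 := hL n hnM.
have e2 := key n hnM.
rewrite coef_poly hnM in e1.
rewrite coef_poly hnM in e2.
rewrite e1 e2 coefD coef64.
apply/eqP; by rewrite [in RHS]addrC [64 * _]mulrC modzMDl.
Qed.
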